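(* Let $A\in\mathbb{R}^{n\times n}$ be monotone, let $A=P_1-R_1+S_1$ be a double weak regular splitting and $A=P_2-R_2+S_2$ a double regular splitting of $A$. Suppose $-1\notin\sigma(R_2P_1^{-1})$ and $\widehat{\mathcal{A}}^{-1}\geq 0$, where $\widehat{\mathcal{A}}=(I+R_2P_1^{-1})A$. If $P_1^{-1}R_1\geq P_2^{-1}R_2$, $P_2^{-1}S_2\geq P_1^{-1}S_1$ and $P_2^{-1}R_2+P_2^{-1}S_2\leq 0$, then $\rho(\mathcal{W}_{12})\leq\min\{\rho(T_1),\rho(T_2)\}<1$, where $$\mathcal{W}_{12}=\begin{pmatrix} P_2^{-1}R_2P_1^{-1}R_1-P_2^{-1}S_2 & -P_2^{-1}R_2P_1^{-1}S_1\\ I & 0\end{pmatrix},\qquad T_i=\begin{pmatrix} P_i^{-1}R_i & -P_i^{-1}S_i\\ I&0\end{pmatrix}\ (i=1,2).$$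
   Context: Inequalities are entrywise; $\rho$ is the spectral radius, $\sigma$ the spectrum. $A$ is monotone if $A$ is nonsingular and $A^{-1}\geq 0$. A double splitting $A=P-R+S$ with $P$ nonsingular is a double regular splitting if $P^{-1}\geq0$, $R\geq0$, $S\leq0$, and a double weak regular splitting if $P^{-1}\geq 0$, $P^{-1}R\geq0$, $P^{-1}S\leq0$. *)

(* Defs.v *)
From HB Require Import structures.
From mathcomp Require Import all_boot all_order all_algebra.
From mathcomp Require Import complex.
From mathcomp Require Import reals.
Set Implicit Arguments. Unset Strict Implicit. Unset Printing Implicit Defensive.
Import Order.TTheory GRing.Theory Num.Theory.
Local Open Scope ring_scope.

Section Defs.
Variable R : realType.

Definition mxle m n (A B : 'M[R]_(m, n)) : Prop := forall i j, A i j <= B i j.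
Definition mxnonneg m n (A : 'M[R]_(m, n)) : Prop := mxle 0 A.

Definition monotone n (A : 'M[R]_n) : Prop := A \in unitmx /\ mxnonneg (invmx A).

Definition double_regular_splitting n (A P Rm S : 'M[R]_n) : Prop :=
  [/\ A = P - Rm + S, P \in unitmx, mxnonneg (invmx P), mxnonneg Rm & mxle S 0].
Definition double_weak_regular_splitting n (A P Rm S : 'M[R]_n) : Prop :=
  [/\ A = P - Rm + S, P \in unitmx, mxnonneg (invmx P),
      mxnonneg (invmx P *m Rm) & mxle (invmx P *m S) 0].

Definition cmx m n (A : 'M[R]_(m, n)) : 'M[R[i]]_(m, n) :=
  map_mx (fun x => x%:C%C) A.

Definition in_spectrum n (A : 'M[R]_n) (z : R[i]) : Prop := eigenvalue (cmx A) z.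

Lemma char_poly_splits n (A : 'M[R]_n) :
  exists s : seq R[i], char_poly (cmx A) == \prod_(z <- s) ('X - z%:P).
Proof.
have [s Hs] := closed_field_poly_normal (char_poly (cmx A)).
exists s; rewrite {1}Hs (eqP (char_poly_monic _)) scale1r //.
Qed.

Definition eigenvalues n (A : 'M[R]_n) : seq R[i] := xchoose (char_poly_splits A).

(* spectral radius: max modulus of the (complex) eigenvalues; the modulus `|z| of z : R[i] is a nonnegative real element of R[i], we take its real part to land in R *)
Definition spectral_radius n (A : 'M[R]_n) : R :=
  \big[Num.max/0]_(z <- eigenvalues A) complex.Re `|z|.

End Defs.

(* Main.v *)
Require Import Defs.
From HB Require Import structures.
From mathcomp Require Import all_boot all_order all_algebra.
From mathcomp Require Import complex.
From mathcomp Require Import reals.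
From mathcomp Require Import classical_sets boolp.
From mathcomp Require Import lra.
Import Order.TTheory GRing.Theory Num.Theory.
Local Open Scope ring_scope.

Set Implicit Arguments. Unset Strict Implicit.
Section Spec.
Variable R : realType.
Local Notation C := (R[i]).

Lemma eigs_spec m (B : 'M[R]_m) :
  char_poly (cmx B) = \prod_(z <- eigenvalues B) ('X - z%:P).
Proof. exact/eqP/(xchooseP (char_poly_splits B)). Qed.

Lemma eig_of_mem m (B : 'M[R]_m) z : z \in eigenvalues B -> eigenvalue (cmx B) z.
Proof. by rewrite eigenvalue_root_char eigs_spec root_prod_XsubC. Qed.

Lemma mem_of_eig m (B : 'M[R]_m) z : eigenvalue (cmx B) z -> z \in eigenvalues B.
Proof. by rewrite eigenvalue_root_char eigs_spec root_prod_XsubC. Qed.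

Lemma spec_ge0 m (B : 'M[R]_m) : 0 <= spectral_radius B.
Proof.
rewrite /spectral_radius; elim: (eigenvalues B) => [|z s IH]; first by rewrite big_nil.
by rewrite big_cons le_max IH orbT.
Qed.

Lemma spec_le m (B : 'M[R]_m) mu : 0 <= mu ->
  (forall z, z \in eigenvalues B -> complex.Re `|z| <= mu) -> spectral_radius B <= mu.
Proof.
rewrite /spectral_radius => mu0; elim: (eigenvalues B) => [|z s IH] H; first by rewrite big_nil.
rewrite big_cons ge_max (H _ (mem_head _ _)) andTb; apply: IH => y ys; apply: H; by rewrite in_cons ys orbT.
Qed.

Lemma spec_lt m (B : 'M[R]_m) mu : 0 < mu ->
  (forall z, z \in eigenvalues B -> complex.Re `|z| < mu) -> spectral_radius B < mu.
Proof.
rewrite /spectral_radius => mu0; elim: (eigenvalues B) => [|z s IH] H; first by rewrite big_nil.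
rewrite big_cons gt_max (H _ (mem_head _ _)) andTb; apply: IH => y ys; apply: H; by rewrite in_cons ys orbT.
Qed.

Lemma spec_ge_mem m (B : 'M[R]_m) z : z \in eigenvalues B -> complex.Re `|z| <= spectral_radius B.
Proof.
rewrite /spectral_radius; elim: (eigenvalues B) => [|y s IH] //.
rewrite in_cons big_cons le_max => /orP[/eqP->|/IH->]; first by rewrite lexx.
by rewrite orbT.
Qed.

Lemma Re_norm_real (t : R) : complex.Re `|t%:C%C| = `|t|.
Proof. by rewrite normc_def /= expr0n /= addr0 sqrtr_sqr. Qed.

Lemma unit_gt_spec m (B : 'M[R]_m) t : spectral_radius B < t -> (t%:M - B) \in unitmx.
Proof.
move=> Ht; rewrite unitmxE unitfE; apply/negP => /det0P [v vn0 vB].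
have ev : eigenvalue B t.
  apply/eigenvalueP; exists v => //; apply/eqP; rewrite -subr_eq0 -mul_mx_scalar -mulmxBr.
  by rewrite -opprB mulmxN vB oppr0.
have evC : eigenvalue (cmx B) t%:C%C.
  by rewrite /cmx -(eigenvalue_map (real_complex R)) in ev.
move: (@spec_ge_mem _ _ _ (@mem_of_eig _ _ _ evC)); rewrite Re_norm_real => H.
have := lt_le_trans Ht (le_trans (ler_norm t) H); by rewrite ltxx.
Qed.
End Spec.

Section Eig.
Variable R : realType.

Lemma ReN (c : R[i]) : complex.Re `|c| = Normc.normc c.
Proof. by []. Qed.

Lemma normC_real (c : R[i]) : `|c| = (Normc.normc c)%:C%C.
Proof. by []. Qed.

Lemma normc_ge0' (c : R[i]) : 0 <= Normc.normc c.
Proof. by rewrite -ReN -ler0c -normC_real normr_ge0. Qed.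

Lemma eig_bound m (B : 'M[R]_m) z : mxnonneg B -> eigenvalue (cmx B) z ->
  exists w : 'I_m -> R, (forall j, 0 <= w j) /\ (exists j, 0 < w j) /\
   (forall i, complex.Re `|z| * w i <= \sum_j w j * B j i).
Proof.
move=> B0 /eigenvalueP [wc wB wn0].
exists (fun j => Normc.normc (wc 0 j)); split; first by move=> j; apply: normc_ge0'.
split.
  have [j Hj] : exists j, wc 0 j != 0.
    apply/existsP; apply: contraR wn0; rewrite negb_exists => /forallP H.
    by apply/eqP/rowP => j; rewrite mxE; apply/eqP; have := H j; rewrite negbK.
  exists j; rewrite lt_def normc_ge0' andbT; apply: contra Hj => /eqP H.
  by apply/eqP; apply: Normc.eq0_normc.
move=> i; rewrite ReN -lecR.
have -> : ((Normc.normc z * Normc.normc (wc 0 i))%:C%C : R[i]) = `|z * wc 0 i|.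
  by rewrite normrM !normC_real rmorphM.
have -> : (z * wc 0 i) = (wc *m cmx B) 0 i by rewrite wB mxE.
rewrite mxE rmorph_sum /=; apply: le_trans (ler_norm_sum _ _ _) _.
apply: ler_sum => j _; rewrite normrM rmorphM /= normC_real mxE.
rewrite ger0_norm // ler0c; have := B0 j i; by rewrite mxE.
Qed.

Lemma rho_cert_core m (B : 'M[R]_m) (v : 'cV[R]_m) z :
  mxnonneg B -> (forall i, 0 < v i 0) -> z \in eigenvalues B ->
  exists w : 'I_m -> R, (forall j, 0 <= w j) /\ (exists j, 0 < w j) /\
   complex.Re `|z| * (\sum_j w j * v j 0) <= \sum_j w j * (B *m v) j 0.
Proof.
move=> B0 v0 /(@eig_of_mem _ _ B) ev.
have [w [w0 [wpos Hw]]] := @eig_bound _ _ _ B0 ev.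
exists w; split => //; split => //.
rewrite mulr_sumr.
have -> : \sum_j w j * (B *m v) j 0 = \sum_i (\sum_j w j * B j i) * v i 0.
  under eq_bigr => j _ do rewrite mxE mulr_sumr.
  rewrite exchange_big /=; apply: eq_bigr => i _; rewrite mulr_suml.
  by apply: eq_bigr => j _; rewrite mulrA.
apply: ler_sum => i _; rewrite mulrA.
by apply: ler_wpM2r; [apply: ltW | apply: Hw].
Qed.

Lemma wsum_pos m (w : 'I_m -> R) (v : 'cV[R]_m) : (forall j, 0 <= w j) -> (exists j, 0 < w j) ->
  (forall i, 0 < v i 0) -> 0 < \sum_j w j * v j 0.
Proof.
move=> w0 [j wj] v0; rewrite (bigD1 j) //=; apply: lt_le_trans (_ : w j * v j 0 <= _).
  exact: mulr_gt0.
rewrite lerDl; apply: sumr_ge0 => k _; apply: mulr_ge0 => //; exact: ltW.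
Qed.

Lemma rho_le_cert m (B : 'M[R]_m) (v : 'cV[R]_m) mu :
  mxnonneg B -> (forall i, 0 < v i 0) -> 0 <= mu ->
  (forall i, (B *m v) i 0 <= mu * v i 0) -> spectral_radius B <= mu.
Proof.
move=> B0 v0 mu0 Bv; apply: spec_le => // z zin.
have [w [w0 [wpos Hw]]] := @rho_cert_core _ _ _ _ B0 v0 zin.
have S0 := @wsum_pos _ _ _ w0 wpos v0.
rewrite -(ler_pM2r S0); apply: le_trans Hw _.
rewrite mulr_sumr; apply: ler_sum => j _.
by rewrite mulrCA; apply: ler_wpM2l.
Qed.

Lemma rho_lt_cert m (B : 'M[R]_m) (v : 'cV[R]_m) mu :
  mxnonneg B -> (forall i, 0 < v i 0) -> 0 < mu ->
  (forall i, (B *m v) i 0 < mu * v i 0) -> spectral_radius B < mu.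
Proof.
move=> B0 v0 mu0 Bv; apply: spec_lt => // z zin.
have [w [w0 [[j wj] Hw]]] := @rho_cert_core _ _ _ _ B0 v0 zin.
have S0 := @wsum_pos _ _ _ w0 (ex_intro _ j wj) v0.
rewrite -(ltr_pM2r S0); apply: le_lt_trans Hw _.
rewrite mulr_sumr (bigD1 j) //= [X in _ < X](bigD1 j) //=.
apply: ltr_leD; first by rewrite mulrCA ltr_pM2l.
apply: ler_sum => k _; rewrite mulrCA; apply: ler_wpM2l => //; exact: ltW.
Qed.
End Eig.

Section PF.
Variable R : realType.

Lemma nnE m n (B : 'M[R]_(m, n)) : mxnonneg B -> forall i j, 0 <= B i j.
Proof. by move=> B0 i j; have := B0 i j; rewrite mxE. Qed.

Lemma mulnn m n (B : 'M[R]_(m, n)) (y : 'cV[R]_n) i : mxnonneg B ->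
  (forall j, 0 <= y j 0) -> 0 <= (B *m y) i 0.
Proof.
move=> B0 y0; rewrite mxE; apply: sumr_ge0 => j _; apply: mulr_ge0 => //; exact: nnE.
Qed.

Lemma ML m (B : 'M[R]_m) t (v x : 'cV[R]_m) : mxnonneg B ->
  (forall i, 0 <= v i 0) -> (forall i, (B *m v) i 0 < t * v i 0) ->
  (forall i, (B *m x) i 0 <= t * x i 0) -> forall i, 0 <= x i 0.
Proof.
move=> B0 v0 Bv Bx k; rewrite leNgt; apply/negP => xk.
have vpos : forall i, 0 < v i 0.
  move=> i; have h2 := Bv i; have h1 := @mulnn _ _ B v i B0 v0.
  rewrite lt_def v0 andbT; apply/negP => /eqP e; rewrite e mulr0 in h2.
  by have := le_lt_trans h1 h2; rewrite ltxx.
pose f i := x i 0 / v i 0.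
case: (@arg_minP _ _ _ k xpredT f isT) => j _ jmin.
set r := f j.
have rk : r <= f k by apply: jmin.
have fk : f k < 0 by rewrite /f ltr_pdivrMr // mul0r.
have rneg : r < 0 := le_lt_trans rk fk.
have xj : x j 0 = r * v j 0 by rewrite /r /f divfK // gt_eqF.
have y0 : forall i, 0 <= (x - r *: v) i 0.
  move=> i; rewrite !mxE subr_ge0 -ler_pdivlMr //; exact: jmin.
have h1 := mulnn j B0 y0.
rewrite mulmxBr -scalemxAr !mxE in h1.
have h2 := Bx j; have h4 := Bv j.
rewrite xj in h2.
have h5 : 0 < t * v j 0 - (B *m v) j 0 by rewrite subr_gt0.
have h6 : r * (t * v j 0 - (B *m v) j 0) < 0 by rewrite pmulr_llt0.
rewrite !mxE in h2 h6. nra.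
Qed.

Definition ones m : 'cV[R]_m := const_mx 1.
Definition uvec m (B : 'M[R]_m) t := invmx (t%:M - B) *m ones m.
Definition cert m (B : 'M[R]_m) t := exists v : 'cV[R]_m,
  (forall i, 0 <= v i 0) /\ (forall i, (B *m v) i 0 < t * v i 0).

Lemma NmulE m (B : 'M[R]_m) t (y : 'cV[R]_m) i :
  ((t%:M - B) *m y) i 0 = t * y i 0 - (B *m y) i 0.
Proof. by rewrite mulmxBl mul_scalar_mx !mxE. Qed.

Lemma uvec_eq m (B : 'M[R]_m) t : (t%:M - B) \in unitmx ->
  forall i, t * uvec B t i 0 - (B *m uvec B t) i 0 = 1.
Proof.
by move=> U i; rewrite -NmulE /uvec mulKVmx // mxE.
Qed.

Lemma uvec_ge0 m (B : 'M[R]_m) t : mxnonneg B -> (t%:M - B) \in unitmx ->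
  cert B t -> forall i, 0 <= uvec B t i 0.
Proof.
move=> B0 U [v [v0 Bv]]; apply: (ML B0 v0 Bv) => i.
have := uvec_eq U i; lra.
Qed.

Lemma cert_big m (B : 'M[R]_m) t : mxnonneg B ->
  1 + \sum_i \sum_j B i j <= t -> cert B t.
Proof.
move=> B0 Ht; exists (ones m); split=> i; first by rewrite mxE.
rewrite mxE /ones.
under eq_bigr => j _ do rewrite mxE mulr1.
rewrite mxE mulr1; apply: le_lt_trans (_ : _ <= \sum_i \sum_j B i j) _.
  rewrite [X in _ <= X](bigD1 i) //= lerDl; apply: sumr_ge0 => a _; apply: sumr_ge0 => b _; exact: nnE.
lra.
Qed.

Lemma cert_open m (B : 'M[R]_m) t s (u : 'cV[R]_m) :
  (forall i, 0 <= u i 0) -> (forall i, t * u i 0 - (B *m u) i 0 = 1) ->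
  s <= t -> (t - s) * (1 + \sum_i u i 0) < 1 -> cert B s.
Proof.
move=> u0 Hu st Hts; exists u; split => // i.
have ui : u i 0 <= 1 + \sum_i u i 0.
  rewrite (bigD1 i) //=; have : 0 <= \sum_(j | j != i) u j 0 by apply: sumr_ge0.
  lra.
have h := Hu i.
have : (t - s) * u i 0 <= (t - s) * (1 + \sum_i u i 0).
  by apply: ler_wpM2l => //; lra.
nra.
Qed.

Lemma Fbound m (F : 'M[R]_m) (y : 'cV[R]_m) : (forall j, 0 <= y j 0) ->
  \sum_a `|(F *m y) a 0| <= (\sum_a \sum_b `|F a b|) * \sum_b y b 0.
Proof.
move=> y0; rewrite mulr_suml; apply: ler_sum => a _.
rewrite mxE; apply: le_trans (ler_norm_sum _ _ _) _.
rewrite mulr_suml; apply: ler_sum => b _.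
rewrite normrM (ger0_norm (y0 b)); apply: ler_wpM2l => //.
by rewrite (bigD1 b) //= lerDl; apply: sumr_ge0.
Qed.

Lemma closure m (B : 'M[R]_m) t :
  (forall h, 0 < h -> ((t + h)%:M - B \in unitmx) /\ forall i, 0 <= uvec B (t + h) i 0) ->
  (t%:M - B) \in unitmx -> forall i, 0 <= uvec B t i 0.
Proof.
move=> Hh Ut i; rewrite leNgt; apply/negP => ui.
set F := invmx (t%:M - B); set u := uvec B t.
set Cc := \sum_a \sum_b `|F a b|; set U := \sum_a `|u a 0|.
have Cc0 : 0 <= Cc by apply: sumr_ge0 => a _; apply: sumr_ge0.
have U0 : 0 <= U by apply: sumr_ge0.
have aU : - u i 0 <= U.
  have h1 := ler_norm (- u i 0); rewrite normrN in h1.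
  rewrite /U [X in _ <= X](bigD1 i) //=.
  have : 0 <= \sum_(j | j != i) `|u j 0| by apply: sumr_ge0.
  lra.
pose h := - u i 0 / (4 * (Cc + 1) * (U + 1)).
have D0 : 0 < 4 * (Cc + 1) * (U + 1) by apply: mulr_gt0; [apply: mulr_gt0|]; lra.
have h0 : 0 < h by apply: divr_gt0 => //; lra.
have hD : h * (4 * (Cc + 1) * (U + 1)) = - u i 0 by rewrite /h divfK // gt_eqF.
have [Us us0] := Hh h h0.
set us := uvec B (t + h) in us0.
have eq1 : u = us + h *: (F *m us).
  have : ((t%:M - B) + h%:M) *m us = ones m.
    have -> : (t%:M - B) + h%:M = (t + h)%:M - B.
      by apply/matrixP => a b; rewrite !mxE mulrnDl addrAC.
    by rewrite /us /uvec mulKVmx.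
  rewrite mulmxDl mul_scalar_mx => /(congr1 (mulmx F)).
  rewrite mulmxDr mulKmx // -scalemxAr => ->; by [].
set S := \sum_b us b 0.
have S0 : 0 <= S by apply: sumr_ge0.
have Fb := Fbound F us0.
have HS1 : S = \sum_a (u a 0 - h * (F *m us) a 0).
  by apply: eq_bigr => a _; rewrite eq1 !mxE; lra.
have HS : S <= U + h * (Cc * S).
  rewrite {1}HS1.
  apply: le_trans (_ : _ <= \sum_a (`|u a 0| + h * `|(F *m us) a 0|)) _.
    apply: ler_sum => a _; have h1 := ler_norm (u a 0).
    have h2 := ler_norm (- (F *m us) a 0); rewrite normrN in h2.
    have : h * - (F *m us) a 0 <= h * `|(F *m us) a 0| by apply: ler_wpM2l => //; apply: ltW.
    lra.
  rewrite big_split /= -mulr_sumr; apply: lerD => //.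
  by apply: ler_wpM2l => //; apply: ltW.
have Hui : - u i 0 <= h * (Cc * S).
  have -> : u i 0 = us i 0 + h * (F *m us) i 0 by rewrite eq1 !mxE.
  have a1 : `|(F *m us) i 0| <= \sum_a `|(F *m us) a 0|.
    by rewrite (bigD1 i) //= lerDl; apply: sumr_ge0.
  have := ler_norm (- (F *m us) i 0); rewrite normrN => a2.
  have : h * - (F *m us) i 0 <= h * (Cc * S).
    apply: ler_wpM2l; first exact: ltW.
    apply: le_trans a2 (le_trans a1 Fb).
  have := us0 i; lra.
set k := h * Cc.
have k0 : 0 <= k by apply: mulr_ge0 => //; apply: ltW.
have k1 : 4 * k * (U + 1) <= - u i 0.
  rewrite -hD /k; have : Cc <= Cc + 1 by lra.
  move=> hc; have : h * Cc <= h * (Cc + 1) by apply: ler_wpM2l => //; apply: ltW.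
  move=> hc2; have : 0 <= U + 1 by lra.
  move=> u1; nra.
have HS' : S <= U + k * S by rewrite /k -mulrA.
have Hui' : - u i 0 <= k * S by rewrite /k -mulrA.
nra.
Qed.

End PF.
Arguments ones {R} m.

Section PF2.
Variable R : realType.

Lemma pf_lite m (B : 'M[R]_m) mu : mxnonneg B -> spectral_radius B < mu ->
  exists v : 'cV[R]_m, (forall i, 0 < v i 0) /\ (forall i, (B *m v) i 0 < mu * v i 0).
Proof.
move=> B0 Hmu.
have mu0 : 0 < mu := le_lt_trans (spec_ge0 B) Hmu.
suff [v [v0 Bv]] : cert B mu.
  exists v; split => // i.
  have h1 := mulnn i B0 v0; have h2 := Bv i.
  rewrite lt_def v0 andbT; apply/negP => /eqP e; rewrite e mulr0 in h2.
  by have := le_lt_trans h1 h2; rewrite ltxx.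
apply: contrapT => Nc.
pose E : set R := fun t => mu <= t /\ ~ cert B t.
have Emu : E mu by split.
pose t0 := 1 + \sum_i \sum_j B i j.
have Eub : forall t, E t -> t <= t0.
  move=> t [_ Nt]; rewrite leNgt; apply/negP => /ltW Ht; apply: Nt; exact: cert_big.
have hs : has_sup E by split; [exists mu | exists t0 => t Et; exact: Eub].
set ts := sup E.
have mu_ts : mu <= ts := sup_upper_bound hs Emu.
have unit_ge : forall s, mu <= s -> (s%:M - B) \in unitmx.
  by move=> s hs'; apply: unit_gt_spec; apply: lt_le_trans Hmu hs'.
have certs : forall s, ts < s -> cert B s.
  move=> s Hs; apply: contrapT => Ns.
  have Es : E s by split => //; apply: le_trans mu_ts (ltW Hs).
  by have := sup_upper_bound hs Es; rewrite leNgt Hs.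
have u0 : forall i, 0 <= uvec B ts i 0.
  apply: closure; last exact: unit_ge.
  move=> h h0; have Hs : ts < ts + h by rewrite ltrDl.
  have Us : (ts + h)%:M - B \in unitmx by apply: unit_ge; apply: le_trans mu_ts (ltW Hs).
  split => //; exact: uvec_ge0 B0 Us (certs _ Hs).
set u := uvec B ts.
have Su0 : 0 <= \sum_i u i 0 by apply: sumr_ge0.
have P0 : 0 < 1 + \sum_i u i 0 by lra.
have d0 : 0 < (1 + \sum_i u i 0)^-1 by rewrite invr_gt0.
have [e Ee He] := sup_adherent d0 hs.
have e_le : e <= ts := sup_upper_bound hs Ee.
apply: (proj2 Ee); apply: (cert_open u0 (uvec_eq (unit_ge ts mu_ts)) e_le).
have : ts - e < (1 + \sum_i u i 0)^-1  by rewrite /ts; lra.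
rewrite -(ltr_pM2r P0) mulVf ?gt_eqF //.
Qed.
End PF2.
Section Helpers.
Variable R : realType.

Lemma mxle_mul m n (M M' : 'M[R]_(m, n)) (y : 'cV[R]_n) i : mxle M M' ->
  (forall j, 0 <= y j 0) -> (M *m y) i 0 <= (M' *m y) i 0.
Proof.
move=> H y0; rewrite !mxE; apply: ler_sum => j _; apply: ler_wpM2r => //; exact: H.
Qed.

Lemma mul_mono m n (M : 'M[R]_(m, n)) (y y' : 'cV[R]_n) i : mxnonneg M ->
  (forall j, y j 0 <= y' j 0) -> (M *m y) i 0 <= (M *m y') i 0.
Proof.
move=> H y0; rewrite !mxE; apply: ler_sum => j _; apply: ler_wpM2l => //; exact: nnE.
Qed.

Lemma nn_mulmx m n p (M : 'M[R]_(m, n)) (N : 'M[R]_(n, p)) :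
  mxnonneg M -> mxnonneg N -> mxnonneg (M *m N).
Proof.
move=> HM HN i j; rewrite !mxE; apply: sumr_ge0 => k _; apply: mulr_ge0; exact: nnE.
Qed.

Lemma nn_add m n (M N : 'M[R]_(m, n)) : mxnonneg M -> mxnonneg N -> mxnonneg (M + N).
Proof. move=> HM HN i j; rewrite !mxE; apply: addr_ge0; exact: nnE. Qed.

Lemma split_all n1 n2 (P : 'I_(n1 + n2) -> Prop) :
  (forall i, P (lshift n2 i)) -> (forall i, P (rshift n1 i)) -> forall k, P k.
Proof. by move=> H1 H2 k; rewrite -(splitK k); case: (split k) => j /=; [apply: H1 | apply: H2]. Qed.

Lemma blk_le m (a a' b b' c c' d d' : 'M[R]_m) :
  mxle a a' -> mxle b b' -> mxle c c' -> mxle d d' ->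
  mxle (block_mx a b c d) (block_mx a' b' c' d').
Proof.
move=> Ha Hb Hc Hd; apply: split_all => i; apply: split_all => j;
by rewrite ?block_mxEul ?block_mxEur ?block_mxEdl ?block_mxEdr.
Qed.

Lemma blk_nn m (a b c d : 'M[R]_m) :
  mxnonneg a -> mxnonneg b -> mxnonneg c -> mxnonneg d -> mxnonneg (block_mx a b c d).
Proof.
move=> Ha Hb Hc Hd; rewrite /mxnonneg -block_mx0.
exact: blk_le.
Qed.

Lemma nn1 m : mxnonneg (1%:M : 'M[R]_m).
Proof. by move=> i j; rewrite !mxE ler0n. Qed.

Lemma nn0 m n : mxnonneg (0 : 'M[R]_(m, n)).
Proof. by move=> i j. Qed.

Lemma blk_mul m (a b : 'M[R]_m) (x y : 'cV[R]_m) :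
  block_mx a b 1%:M 0 *m col_mx x y = col_mx (a *m x + b *m y) x.
Proof. by rewrite mul_block_col mul1mx mul0mx addr0. Qed.

Lemma rowpos m (Q : 'M[R]_m) : mxnonneg Q -> Q \in unitmx ->
  forall i, 0 < (Q *m ones m) i 0.
Proof.
move=> Q0 U i.
have : (Q *m invmx Q) i i = 1 by rewrite mulmxV // mxE eqxx.
rewrite mxE => H.
have [j Hj] : exists j, Q i j != 0.
  apply/existsP; apply: contraT; rewrite negb_exists => /forallP Hn.
  have : (1 : R) = 0.
    rewrite -H; apply: big1 => j _.
    by have := Hn j; rewrite negbK => /eqP ->; rewrite mul0r.
  by move/eqP; rewrite oner_eq0.
rewrite mxE (bigD1 j) //= mxE mulr1; apply: lt_le_trans (_ : Q i j <= _).
  by rewrite lt_def Hj; apply: nnE.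
rewrite lerDl; apply: sumr_ge0 => k _; rewrite mxE mulr1; exact: nnE.
Qed.

Lemma eta_lemma m (a b : 'I_m -> R) : (forall i, 0 <= a i) ->
  exists eta, 0 < eta /\ forall i, 0 < a i -> eta * `|b i| < a i.
Proof.
move=> a0; set S := \sum_i (`|b i| / a i).
have S0 : 0 <= S by apply: sumr_ge0 => i _; apply: divr_ge0.
exists (1 + S)^-1; split; first by rewrite invr_gt0; lra.
move=> i ai; rewrite mulrC ltr_pdivrMr; last lra.
have : `|b i| / a i <= S.
  rewrite /S (bigD1 i) //= lerDl; apply: sumr_ge0 => j _; apply: divr_ge0; [exact: normr_ge0 | exact: a0].
have e : `|b i| = (`|b i| / a i) * a i by rewrite divfK // gt_eqF.
move=> H; rewrite e; nra.
Qed.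

Lemma rowzero m n (M : 'M[R]_(m, n)) (d : 'cV[R]_n) i : mxnonneg M ->
  (forall j, 0 < d j 0) -> (M *m d) i 0 = 0 -> forall j, M i j = 0.
Proof.
move=> M0 d0; rewrite mxE => /eqP; rewrite psumr_eq0 => [/allP H j|j _].
  have := H j (mem_index_enum _); rewrite mulf_eq0 => /orP[/eqP //|].
  by rewrite gt_eqF.
by apply: mulr_ge0; [apply: nnE | apply: ltW].
Qed.

Lemma rowzero_mul m n p (M : 'M[R]_(m, n)) (X : 'M[R]_(n, p)) i j :
  (forall k, M i k = 0) -> (M *m X) i j = 0.
Proof. by move=> H; rewrite mxE; apply: big1 => k _; rewrite H mul0r. Qed.
End Helpers.
Section Entry.
Variable R : realType.
Lemma eD m n (p q : 'M[R]_(m, n)) i j : (p + q) i j = p i j + q i j.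
Proof. by rewrite mxE. Qed.
Lemma eN m n (p : 'M[R]_(m, n)) i j : (- p) i j = - p i j.
Proof. by rewrite mxE. Qed.
Lemma eB m n (p q : 'M[R]_(m, n)) i j : (p - q) i j = p i j - q i j.
Proof. by rewrite !mxE. Qed.
Lemma eZ m n c (p : 'M[R]_(m, n)) i j : (c *: p) i j = c * p i j.
Proof. by rewrite mxE. Qed.
Lemma e1 m i j : (ones m : 'cV[R]_m) i j = 1.
Proof. by rewrite mxE. Qed.
End Entry.

Section CertW.
Variable R : realType.

Lemma mid_lemma (a b : R) : a < b -> exists mu, a < mu /\ mu < b.
Proof. move=> h; exists ((a + b) / 2); split; lra. Qed.

Lemma mid2 (r2 rw : R) : 0 <= r2 -> r2 < rw -> r2 < 1 ->
  exists mu, [/\ r2 < mu, mu < rw, 0 < mu & mu < 1].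
Proof.
move=> h0 h1 h2; pose m1 := Num.min rw 1.
have m1a : m1 <= rw by rewrite /m1 ge_min lexx.
have m1b : m1 <= 1 by rewrite /m1 ge_min lexx orbT.
have m1c : r2 < m1 by rewrite /m1 lt_min h1 h2.
exists ((r2 + m1) / 2); split; lra.
Qed.

Lemma rho_mono m (B1 B2 : 'M[R]_m) : mxnonneg B1 -> mxnonneg B2 -> mxle B2 B1 ->
  spectral_radius B2 <= spectral_radius B1.
Proof.
move=> B1n B2n le21; rewrite leNgt; apply/negP => H.
have [mu [h1 h2]] := mid_lemma H.
have mu0 : 0 < mu := le_lt_trans (spec_ge0 B1) h1.
have [x [xpos Hx]] := pf_lite B1n h1.
have x0 : forall j, 0 <= x j 0 by move=> j; apply: ltW.
have := rho_lt_cert B2n xpos mu0 (fun k => le_lt_trans (mxle_mul k le21 x0) (Hx k)).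
by move/(lt_trans h2); rewrite ltxx.
Qed.

Lemma certW n (A P1 R1 S1 P2 R2 S2 : 'M[R]_n) (mu : R) (a b : 'cV[R]_n) :
  A = P1 - R1 + S1 -> P1 \in unitmx -> mxnonneg (invmx P1) ->
  mxnonneg (invmx P1 *m R1) -> mxnonneg (- (invmx P1 *m S1)) ->
  A = P2 - R2 + S2 -> P2 \in unitmx -> mxnonneg (invmx P2) ->
  mxnonneg R2 -> mxnonneg (- S2) ->
  mxle (invmx P2 *m R2) (- (invmx P2 *m S2)) ->
  0 < mu -> mu < 1 -> (forall i, 0 < a i 0) -> (forall i, 0 < b i 0) ->
  (forall i, (invmx P2 *m R2 *m a + - (invmx P2 *m S2) *m b) i 0 < mu * a i 0) ->
  (forall i, a i 0 < mu * b i 0) ->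
  exists z : 'cV[R]_(n + n), (forall k, 0 < z k 0) /\
   forall k, (block_mx (invmx P2 *m R2 *m (invmx P1 *m R1) + - (invmx P2 *m S2))
                (invmx P2 *m R2 *m - (invmx P1 *m S1)) 1%:M 0 *m z) k 0 <= mu * z k 0.
Proof.
move=> eA1 U1 Q1n K1n L1n eA2 U2 Q2n R2n S2n KL mu0 mu1 apos bpos Htop Hbot.
set Q1 := invmx P1 in Q1n K1n L1n *; set Q2 := invmx P2 in Q2n KL Htop *.
set K1 := Q1 *m R1 in K1n *; set L1 := - (Q1 *m S1) in L1n *.
set K2 := Q2 *m R2 in KL Htop *; set L2 := - (Q2 *m S2) in KL Htop *.
have K2n : mxnonneg K2 by apply: nn_mulmx.
have L2n : mxnonneg L2 by rewrite /L2 -mulmxN; apply: nn_mulmx.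
have Q1A : Q1 *m A = 1%:M - K1 - L1.
  by rewrite eA1 !mulmxDr mulmxN mulVmx // /L1 opprK.
have a0 : forall i, 0 <= a i 0 by move=> i; apply: ltW.
pose F2 (y : 'cV[R]_n) := mu *: (K2 *m y) + L2 *m y.
pose Fw (y : 'cV[R]_n) := mu *: ((K2 *m K1 + L2) *m y) + (K2 *m L1) *m y.
have F2u : forall i, (F2 a) i 0 < mu * mu * a i 0.
  move=> i; rewrite /F2 eD eZ.
  have h1 : (L2 *m a) i 0 <= (L2 *m (mu *: b)) i 0.
    by apply: mul_mono => // j; rewrite eZ; apply: ltW.
  rewrite -scalemxAr eZ in h1.
  have := Htop i; rewrite eD => h2.
  have : mu * ((K2 *m a) i 0 + (L2 *m b) i 0) < mu * (mu * a i 0) by rewrite ltr_pM2l.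
  lra.
set v := F2 a.
have v0 : forall i, 0 <= v i 0.
  move=> i; rewrite /v /F2 eD eZ; apply: addr_ge0; last exact: mulnn.
  by apply: mulr_ge0; [apply: ltW | apply: mulnn].
have Av0 : forall i, 0 <= (A *m v) i 0.
  have Pv : P2 *m v = mu *: (R2 *m a) - S2 *m a.
    have -> : v = Q2 *m (mu *: (R2 *m a) - S2 *m a).
      by rewrite /v /F2 mulmxBr -scalemxAr /K2 /L2 !mulmxA mulNmx.
    by rewrite mulKVmx.
  move=> i; rewrite eA2 !mulmxDl mulNmx Pv !eD !eN eZ.
  have hR : (R2 *m v) i 0 <= (R2 *m ((mu * mu) *: a)) i 0.
    by apply: mul_mono => // j; rewrite eZ; apply: ltW; apply: F2u.
  have hS : ((- S2) *m v) i 0 <= ((- S2) *m ((mu * mu) *: a)) i 0.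
    by apply: mul_mono => // j; rewrite eZ; apply: ltW; apply: F2u.
  rewrite -!scalemxAr !eZ !mulNmx !eN in hR hS.
  have hRa : 0 <= (R2 *m a) i 0 by apply: mulnn.
  have hSa : 0 <= ((- S2) *m a) i 0 by apply: mulnn.
  rewrite mulNmx eN in hSa.
  have f1 : 0 <= (mu - mu * mu) * (R2 *m a) i 0.
    by apply: mulr_ge0 => //; rewrite -{1}(mulr1 mu) -mulrBr; apply: mulr_ge0; lra.
  have f2 : 0 <= (1 - mu * mu) * - (S2 *m a) i 0.
    apply: mulr_ge0 => //; have : mu * mu <= 1 * 1 by apply: ler_pM; lra.
    lra.
  lra.
have FwF2 : forall y : 'cV[R]_n, (forall j, 0 <= y j 0) -> (forall j, 0 <= (A *m y) j 0) ->
    forall i, (Fw y) i 0 <= (F2 y) i 0.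
  move=> y y0 Ay0 i.
  have et : K2 *m (Q1 *m (A *m y)) = K2 *m y - K2 *m (K1 *m y) - K2 *m (L1 *m y).
    by rewrite [Q1 *m (A *m y)]mulmxA Q1A !mulmxBl mul1mx !mulmxBr.
  have t0 : 0 <= (K2 *m (Q1 *m (A *m y))) i 0.
    by apply: mulnn => // j; apply: mulnn.
  rewrite et !eB in t0.
  have hqp : (K2 *m y) i 0 <= (L2 *m y) i 0 by apply: mxle_mul.
  have hr : 0 <= (K2 *m (K1 *m y)) i 0 by apply: mulnn => // j; apply: mulnn.
  rewrite /Fw /F2 mulmxDl -[K2 *m K1 *m y]mulmxA -[K2 *m L1 *m y]mulmxA !eD !eZ eD.
  have : 0 <= (1 - mu) * ((L2 *m y) i 0 - (K2 *m y) i 0) by apply: mulr_ge0; lra.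
  have : 0 <= (1 - mu) * (K2 *m (K1 *m y)) i 0 by apply: mulr_ge0; lra.
  lra.
have eMZ : forall (M : 'M[R]_n) (c : R) (y : 'cV[R]_n) i, (M *m (c *: y)) i 0 = c * (M *m y) i 0.
  by move=> M c y i; rewrite -scalemxAr eZ.
have eMD : forall (M : 'M[R]_n) (y y' : 'cV[R]_n) i, (M *m (y + y')) i 0 = (M *m y) i 0 + (M *m y') i 0.
  by move=> M y y' i; rewrite mulmxDr eD.
set d := (mu * mu) *: a - v.
have dpos : forall i, 0 < d i 0.
  by move=> i; rewrite /d eB eZ subr_gt0; apply: F2u.
have d0 : forall i, 0 <= d i 0 by move=> i; apply: ltW.
pose alpha i := mu * mu * v i 0 - (Fw v) i 0.
pose beta i := mu * mu * a i 0 - (Fw a) i 0.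
have alpha_ge : forall i, mu * (K2 *m d) i 0 + (L2 *m d) i 0 <= alpha i.
  move=> i; have h := FwF2 v v0 Av0 i.
  have Kd : (K2 *m d) i 0 = mu * mu * (K2 *m a) i 0 - (K2 *m v) i 0.
    by rewrite /d mulmxBr eB eMZ.
  have Ld : (L2 *m d) i 0 = mu * mu * (L2 *m a) i 0 - (L2 *m v) i 0.
    by rewrite /d mulmxBr eB eMZ.
  have va : v i 0 = mu * (K2 *m a) i 0 + (L2 *m a) i 0 by rewrite /v /F2 eD eZ.
  rewrite /Fw /F2 !eD !eZ in h.
  rewrite /alpha /Fw !eD !eZ Kd Ld; lra.
have alpha0 : forall i, 0 <= alpha i.
  move=> i; apply: le_trans (alpha_ge i); apply: addr_ge0; last by apply: mulnn.
  by apply: mulr_ge0; [apply: ltW | apply: mulnn].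
have [eta [eta0 Heta]] := eta_lemma beta alpha0.
pose v' := v + eta *: a.
have v'pos : forall i, 0 < v' i 0.
  move=> i; rewrite /v' eD eZ; have := v0 i; have : 0 < eta * a i 0 by apply: mulr_gt0.
  lra.
exists (col_mx (mu *: v') v'); split.
  apply: split_all => i; rewrite ?col_mxEu ?col_mxEd //.
  by rewrite eZ; apply: mulr_gt0.
rewrite blk_mul; apply: split_all => i; rewrite ?col_mxEu ?col_mxEd; last first.
  by rewrite eZ.
have key : 0 <= alpha i + eta * beta i.
  have [ai|] := ltP 0 (alpha i).
    have h1 := Heta i ai; have h2 := ler_norm (- beta i); rewrite normrN in h2.
    have : eta * - beta i <= eta * `|beta i| by apply: ler_wpM2l => //; apply: ltW.
    lra.
  move=> ale; have a0' : alpha i = 0 by apply: le_anti; rewrite ale alpha0.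
  have h := alpha_ge i; rewrite a0' in h.
  have hK : 0 <= (K2 *m d) i 0 by apply: mulnn.
  have hL : 0 <= (L2 *m d) i 0 by apply: mulnn.
  have hK' : 0 <= mu * (K2 *m d) i 0 by apply: mulr_ge0 => //; apply: ltW.
  have K0 : (K2 *m d) i 0 = 0.
    have : mu * (K2 *m d) i 0 = 0 by lra.
    by move/eqP; rewrite mulf_eq0 gt_eqF //= => /eqP.
  have L0 : (L2 *m d) i 0 = 0 by lra.
  have rK := rowzero K2n dpos K0; have rL := rowzero L2n dpos L0.
  have Fa0 : (Fw a) i 0 = 0.
    rewrite /Fw eD eZ mulmxDl eD -[K2 *m K1 *m a]mulmxA -[K2 *m L1 *m a]mulmxA.
    by rewrite !rowzero_mul // !addr0 mulr0.
  have : 0 <= beta i by rewrite /beta Fa0 subr0; apply: mulr_ge0; [apply: mulr_ge0; apply: ltW|].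
  move=> b0; rewrite a0' add0r; apply: mulr_ge0 => //; exact: ltW.
move: key; rewrite /alpha /beta; clearbody v; rewrite /Fw /v' !(eD, eMD, eMZ, eZ); lra.
Qed.
End CertW.

Lemma stepA (R : realType) n (A P2 R2 S2 : 'M[R]_n) :
  A \in unitmx -> mxnonneg (invmx A) -> A = P2 - R2 + S2 -> P2 \in unitmx ->
  mxnonneg (invmx P2) -> mxnonneg R2 -> mxnonneg (- S2) ->
  spectral_radius (block_mx (invmx P2 *m R2) (- (invmx P2 *m S2)) 1%:M 0) < 1.
Proof.
move=> AU Ainv eA2 U2 Q2n R2n S2n.
pose Q2 := invmx P2.
pose K2 := Q2 *m R2; pose L2 := - (Q2 *m S2).
pose T2 := block_mx K2 L2 1%:M 0.
have K2n : mxnonneg K2 by apply: nn_mulmx.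
have L2n : mxnonneg L2 by rewrite /L2 -mulmxN; apply: nn_mulmx.
have T2e : T2 = block_mx K2 L2 1%:M 0 by [].
have T2n : mxnonneg T2 by rewrite T2e; apply: blk_nn; [exact: K2n | exact: L2n | exact: nn1 | exact: nn0].
have Q2A : Q2 *m A = 1%:M - K2 - L2.
  by rewrite eA2 !mulmxDr mulmxN mulVmx // /L2 opprK.
change (spectral_radius T2 < 1).
pose u := invmx A *m ones n.
have u0 : forall i, 0 <= u i 0 by move=> i; apply: mulnn => // j; rewrite e1.
have Hu : forall i, u i 0 - (K2 *m u) i 0 - (L2 *m u) i 0 = (Q2 *m ones n) i 0.
  move=> i; have : (1%:M - K2 - L2) *m u = Q2 *m ones n.
    by rewrite -Q2A -mulmxA /u mulKVmx.
  by rewrite !mulmxBl mul1mx => <-; rewrite !eB.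
have QU : Q2 \in unitmx by rewrite unitmx_inv.
have apos := rowpos Q2n QU.
have [eta [eta0 Heta]] := @eta_lemma R n (fun i => (Q2 *m ones n) i 0)
   (fun i => (L2 *m ones n) i 0) (fun i => ltW (apos i)).
pose x := col_mx u (u + eta *: ones n).
have Tx : T2 *m x = col_mx (K2 *m u + L2 *m (u + eta *: ones n)) u by rewrite T2e blk_mul.
have top : forall i, (K2 *m u + L2 *m (u + eta *: ones n)) i 0 < u i 0.
  move=> i; rewrite mulmxDr -scalemxAr !eD eZ.
  have := Heta i (apos i); have := Hu i; have := ler_norm ((L2 *m ones n) i 0).
  move=> h1 h2 h3; have : eta * (L2 *m ones n) i 0 <= eta * `|(L2 *m ones n) i 0|.
    by apply: ler_wpM2l => //; apply: ltW.
  lra.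
apply: (@rho_lt_cert _ _ T2 x 1 T2n) => //.
  apply: split_all => i; rewrite ?col_mxEu ?col_mxEd.
    have := top i; have := mulnn i K2n u0.
    have := @mulnn _ _ _ L2 (u + eta *: ones n) i L2n.
    move=> h1 h2 h3; have : 0 <= (L2 *m (u + eta *: ones n)) i 0.
      by apply: h1 => j; rewrite eD eZ e1; have := u0 j; lra.
    rewrite mulmxDr eD in h3 *; lra.
  by rewrite eD eZ e1; have := u0 i; lra.
rewrite Tx; apply: split_all => i; rewrite ?col_mxEu ?col_mxEd mul1r.
  exact: top.
by rewrite eD eZ e1; lra.
Qed.

Lemma final_arith (R : realType) (a b c : R) : a <= c -> c <= b -> c < 1 ->
  a <= Num.min b c /\ Num.min b c < 1.
Proof.
move=> h1 h2 h3; split; first by rewrite le_min (le_trans h1 h2) h1.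
by rewrite gt_min h3 orbT.
Qed.

Lemma main_core (R : realType) (n : nat) (A P1 R1 S1 P2 R2 S2 : 'M[R]_n) :
  A \in unitmx -> mxnonneg (invmx A) ->
  A = P1 - R1 + S1 -> P1 \in unitmx -> mxnonneg (invmx P1) ->
  mxnonneg (invmx P1 *m R1) -> mxle (invmx P1 *m S1) 0 ->
  A = P2 - R2 + S2 -> P2 \in unitmx -> mxnonneg (invmx P2) -> mxnonneg R2 -> mxle S2 0 ->
  mxle (invmx P2 *m R2) (invmx P1 *m R1) ->
  mxle (invmx P1 *m S1) (invmx P2 *m S2) ->
  mxle (invmx P2 *m R2 + invmx P2 *m S2) 0 ->
  spectral_radius (block_mx (invmx P2 *m R2 *m invmx P1 *m R1 - invmx P2 *m S2)
                      (- (invmx P2 *m R2 *m invmx P1 *m S1)) 1%:M 0) <=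
    Num.min (spectral_radius (block_mx (invmx P1 *m R1) (- (invmx P1 *m S1)) 1%:M 0))
            (spectral_radius (block_mx (invmx P2 *m R2) (- (invmx P2 *m S2)) 1%:M 0)) /\
  Num.min (spectral_radius (block_mx (invmx P1 *m R1) (- (invmx P1 *m S1)) 1%:M 0))
          (spectral_radius (block_mx (invmx P2 *m R2) (- (invmx P2 *m S2)) 1%:M 0)) < 1.
Proof.
move=> AU Ainv eA1 U1 Q1n K1n L1np eA2 U2 Q2n R2n S2np HK HL HKL.
pose Q1 := invmx P1; pose Q2 := invmx P2.
pose K1 := Q1 *m R1; pose L1 := - (Q1 *m S1).
pose K2 := Q2 *m R2; pose L2 := - (Q2 *m S2).
have L1n : mxnonneg L1.
  by move=> i j; have := L1np i j; rewrite !mxE oppr_ge0.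
have K2n : mxnonneg K2 by apply: nn_mulmx.
have S2n : mxnonneg (- S2).
  by move=> i j; have := S2np i j; rewrite !mxE oppr_ge0.
have L2n : mxnonneg L2 by rewrite /L2 -mulmxN; apply: nn_mulmx.
have LL : mxle L2 L1.
  by move=> i j; have := HL i j; rewrite !mxE lerN2.
have KL : mxle K2 L2.
  move=> i j; have := HKL i j; rewrite eD [(0 : 'M_n) i j]mxE /L2 eN => h; lra.
have Wn : mxnonneg (block_mx (K2 *m K1 + L2) (K2 *m L1) 1%:M 0).
  apply: blk_nn; [apply: nn_add => //; apply: nn_mulmx | apply: nn_mulmx|
    apply: nn1 | apply: nn0] => //.
have We : block_mx (invmx P2 *m R2 *m invmx P1 *m R1 - invmx P2 *m S2)
                      (- (invmx P2 *m R2 *m invmx P1 *m S1)) 1%:M 0 =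
          block_mx (K2 *m K1 + L2) (K2 *m L1) 1%:M 0.
  by rewrite /K2 /K1 /L1 /L2 mulmxN !mulmxA.
rewrite We.
have T1n : mxnonneg (block_mx K1 L1 1%:M 0).
  by apply: blk_nn; [exact: K1n | exact: L1n | exact: nn1 | exact: nn0].
have T2n : mxnonneg (block_mx K2 L2 1%:M 0).
  by apply: blk_nn; [exact: K2n | exact: L2n | exact: nn1 | exact: nn0].
have rho2 : spectral_radius (block_mx K2 L2 1%:M 0) < 1.
  exact: (stepA AU Ainv eA2 U2 Q2n R2n S2n).
have r21 : spectral_radius (block_mx K2 L2 1%:M 0) <= spectral_radius (block_mx K1 L1 1%:M 0).
  apply: rho_mono => //; apply: blk_le => // i j; exact: lexx.
have rW : spectral_radius (block_mx (K2 *m K1 + L2) (K2 *m L1) 1%:M 0) <=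
          spectral_radius (block_mx K2 L2 1%:M 0).
  rewrite leNgt; apply/negP => HW.
  have [mu [h1 h2 mu0 mu1]] := mid2 (spec_ge0 _) HW rho2.
  have [x [xpos Hx]] := pf_lite T2n h1.
  rewrite -(vsubmxK x) blk_mul in Hx.
  have apos : forall i, 0 < usubmx x i 0.
    by move=> i; rewrite mxE; apply: xpos.
  have bpos : forall i, 0 < dsubmx x i 0.
    by move=> i; rewrite mxE; apply: xpos.
  have Htop : forall i, (K2 *m usubmx x + L2 *m dsubmx x) i 0 < mu * usubmx x i 0.
    by move=> i; have := Hx (lshift n i); rewrite !col_mxEu.
  have Hbot : forall i, usubmx x i 0 < mu * dsubmx x i 0.
    by move=> i; have := Hx (rshift n i); rewrite !col_mxEd.
  have [z [zpos Hz]] := certW eA1 U1 Q1n K1n L1n eA2 U2 Q2n R2n S2n KL mu0 mu1 apos bpos Htop Hbot.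
  have := rho_le_cert Wn zpos (ltW mu0) Hz.
  by move/(lt_le_trans h2); rewrite ltxx.
exact: final_arith rW r21 rho2.
Qed.

Unset Implicit Arguments.

Theorem corollary3p18 (R : realType) (n : nat) (A P1 R1 S1 P2 R2 S2 : 'M[R]_n) :
  monotone A ->
  double_weak_regular_splitting A P1 R1 S1 ->
  double_regular_splitting A P2 R2 S2 ->
  ~ in_spectrum (R2 *m invmx P1) (-1) ->
  monotone ((1%:M + R2 *m invmx P1) *m A) ->
  mxle (invmx P2 *m R2) (invmx P1 *m R1) ->
  mxle (invmx P1 *m S1) (invmx P2 *m S2) ->
  mxle (invmx P2 *m R2 + invmx P2 *m S2) 0 ->
  let W12 := block_mx (invmx P2 *m R2 *m invmx P1 *m R1 - invmx P2 *m S2)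
                      (- (invmx P2 *m R2 *m invmx P1 *m S1))
                      1%:M 0 in
  let T1 := block_mx (invmx P1 *m R1) (- (invmx P1 *m S1)) 1%:M 0 in
  let T2 := block_mx (invmx P2 *m R2) (- (invmx P2 *m S2)) 1%:M 0 in
  spectral_radius W12 <= Num.min (spectral_radius T1) (spectral_radius T2) /\
  Num.min (spectral_radius T1) (spectral_radius T2) < 1.
Proof.
move=> [AU Ainv] [eA1 U1 Q1n K1n L1np] [eA2 U2 Q2n R2n S2np] _ _ HK HL HKL.
exact: (main_core AU Ainv eA1 U1 Q1n K1n L1np eA2 U2 Q2n R2n S2np HK HL HKL).
Qed.
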